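(* Let $G$ be a graph, let $x$, $y$ be two vertices of $G$, and let $F_1, F_2, \ldots, F_c$ be the components of $G\setminus x\setminus y$. If $\rho^*_G(\{x,y\}, V(F_i))=2$ for all $1\le i\le c$, then $G$ has a vertex-minor isomorphic to the graph obtained from two disjoint copies of $K_c$ by adding a perfect matching between them (the $i$-th vertex of one copy joined to the $i$-th vertex of the other).
   Context: All graphs are simple. For disjoint $X,Y\subseteq V(G)$, $\rho^*_G(X,Y)$ denotes the rank over the binary field of the submatrix of the adjacency matrix of $G$ with rows indexed by $X$ and columns indexed by $Y$. A graph $H$ is a vertex-minor of $G$ if $H$ is an induced subgraph of a graph obtained from $G$ by a sequence of local complementations (local complementation at $v$ replaces the subgraph induced on the neighborhood of $v$ by its complement). *)

(* Defs.v *)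
From HB Require Import structures.
From mathcomp Require Import all_boot all_order all_algebra.
Set Implicit Arguments. Unset Strict Implicit. Unset Printing Implicit Defensive.
Import GRing.Theory.
Local Open Scope ring_scope.

Definition simple_graph (T : finType) (e : rel T) : Prop :=
  symmetric e /\ irreflexive e.

Definition cut_rank (T : finType) (e : rel T) (X Y : {set T}) : nat :=
  \rank (\matrix_(i < #|X|, j < #|Y|)
           ((e (enum_val i) (enum_val j))%:R : 'F_2)).

Definition local_comp (T : finType) (e : rel T) (v : T) : rel T :=
  fun a b => if [&& a != b, e v a & e v b] then ~~ e a b else e a b.

Definition local_comps (T : finType) (e : rel T) (s : seq T) : rel T :=
  foldl (@local_comp T) e s.

(* H (on U) is isomorphic to a vertex-minor of G (on T): H is isomorphic,
   via an injection f, to the subgraph of some locally-equivalent graph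
   induced on the image of f. *)
Definition has_vertex_minor (T U : finType) (e : rel T) (h : rel U) : Prop :=
  exists (s : seq T) (f : U -> T),
    injective f /\ forall u w : U, h u w = local_comps e s (f u) (f w).

Definition del2 (T : finType) (e : rel T) (x y : T) : rel T :=
  fun a b => [&& e a b, a \notin [set x; y] & b \notin [set x; y]].

Definition components_del2 (T : finType) (e : rel T) (x y : T)
  : {set {set T}} :=
  [set [set b | connect (del2 e x y) a b] | a in ~: [set x; y]].

Definition double_clique (c : nat) : rel (bool * 'I_c) :=
  fun p q => if p.1 == q.1 then p.2 != q.2 else p.2 == q.2.

(* Main.v *)
Require Import Defs.
From mathcomp Require Import all_boot all_order all_algebra.
From Stdlib Require Import Classical_Prop.
Set Implicit Arguments. Unset Strict Implicit. Unset Printing Implicit Defensive.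

Section LC.
Variable T : finType.
Implicit Types (g : rel T).

Lemma lcE g c a b : local_comp g c a b =
  if [&& a != b, g c a & g c b] then ~~ g a b else g a b.
Proof. by []. Qed.

Lemma lc_sym g c : symmetric g -> symmetric (local_comp g c).
Proof.
move=> sg a b; rewrite !lcE [b == a]eq_sym (andbC (g c b)) (sg b a) //.
Qed.

Lemma lc_irr g c : irreflexive g -> irreflexive (local_comp g c).
Proof. by move=> ig a; rewrite lcE eqxx /= ig. Qed.

Lemma lc_out g c z t : ~~ g c z -> local_comp g c z t = g z t.
Proof. by move=> h; rewrite lcE (negbTE h) /= andbF. Qed.

Lemma lc_out' g c z t : ~~ g c z -> local_comp g c t z = g t z.
Proof. by move=> h; rewrite lcE (negbTE h) /= !andbF. Qed.

Lemma lc_center g c t : irreflexive g -> local_comp g c c t = g c t.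
Proof. by move=> ig; apply: lc_out; rewrite ig. Qed.

Lemma lc_center' g c t : irreflexive g -> local_comp g c t c = g t c.
Proof. by move=> ig; apply: lc_out'; rewrite ig. Qed.

Lemma lcs_cons g c s : local_comps g (c :: s) = local_comps (local_comp g c) s.
Proof. by []. Qed.

Lemma lcs_cat g s1 s2 : local_comps g (s1 ++ s2) = local_comps (local_comps g s1) s2.
Proof. by rewrite /local_comps foldl_cat. Qed.

Lemma lcs_sym g s : symmetric g -> symmetric (local_comps g s).
Proof. by elim: s g => // c s IH g sg; rewrite lcs_cons; apply/IH/lc_sym. Qed.

Lemma lcs_irr g s : irreflexive g -> irreflexive (local_comps g s).
Proof. by elim: s g => // c s IH g sg; rewrite lcs_cons; apply/IH/lc_irr. Qed.

Lemma hvm_lc (U : finType) g s (h : rel U) :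
  has_vertex_minor (local_comps g s) h -> has_vertex_minor g h.
Proof.
by move=> [s' [f [fi hf]]]; exists (s ++ s'), f; split=> // u w; rewrite lcs_cat.
Qed.

Definition agree (R : {set T}) g1 g2 :=
  forall a b, (a \in R) || (b \in R) -> g1 a b = g2 a b.

Lemma agree_lcs R g1 g2 s : agree R g1 g2 -> all (mem R) s ->
  agree R (local_comps g1 s) (local_comps g2 s).
Proof.
elim: s g1 g2 => // c s IH g1 g2 ag /andP [cR sR].
rewrite !lcs_cons; apply: IH => // a b ab.
have cR' : c \in R := cR.
by rewrite !lcE (ag c a) ?cR' // (ag c b) ?cR' // (ag a b).
Qed.

Lemma path_tr (e e' : rel T) z s :
  (forall c d, d \in s -> e c d -> e' c d) -> path e z s -> path e' z s.
Proof.
elim: s z => //= d s IH z h /andP [ezd ps].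
rewrite h ?mem_head //; apply: IH => // c d' d's; apply: h; rewrite in_cons d's orbT //.
Qed.

Definition pat g (x y v w : T) := [&& g x v, ~~ g y v, g y w, ~~ g x w & g v w].

Definition adm g (x y : T) (F : {set T}) u p :=
  [&& u \in F, all (mem F) p, path g u p, g x u, ~~ g y u & g y (last u p)].

Lemma suffix_of (g : rel T) (F : {set T}) a q z : z \in q -> exists q2,
  [/\ path g a q -> path g z q2, all (mem F) q -> all (mem F) (z :: q2),
      last a q = last z q2 & size q2 < size q].
Proof.
case/splitPr => q1 q2; exists q2; split.
- by rewrite cat_path => /andP [_ /= /andP [_ ->]].
- by rewrite all_cat => /andP [_ ->].
- by rewrite last_cat.
- by rewrite size_cat /= addnS ltnS leq_addl.
Qed.

Lemma key (x y : T) (F : {set T}) n : forall g u p, size p <= n ->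
  symmetric g -> irreflexive g -> adm g x y F u p ->
  exists s v w, [&& all (mem F) s, v \in F, w \in F & pat (local_comps g s) x y v w].
Proof.
elim: n => [|n IH] g u p.
  by case: p => // _ _ _ /and5P [_ _ _ _ /andP [/negbTE -> ]].
move=> sp sg ig ad.
have [[u' [p' [lt ad']]]|nomin] :=
  classic (exists u' p', size p' < size p /\ adm g x y F u' p').
  by apply: (IH g u' p') => //; rewrite -ltnS (leq_trans lt).
have mn : forall u' p', adm g x y F u' p' -> size p' < size p -> False.
  by move=> u' p' a l; apply: nomin; exists u', p'.
move: ad; rewrite /adm => /and5P [uF pF pp exu /andP [nyu ylast]].
case: p sp mn nomin pF pp ylast => [|a p'] sp mn _ pF pp ylast.
  by rewrite /= ylast in nyu.
move: pF pp => /= /andP [aF p'F] /andP [eua pa].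
case: p' sp mn aF p'F pa ylast => [|b p''] sp mn aF p'F pa ylast.
  case exa: (g x a).
    exists [:: u], u, a; rewrite /= uF aF /pat /=.
    rewrite !lc_center' // !lc_center // exu nyu eua /=.
    rewrite lcE (sg u y) (negbTE nyu) ylast /= andbF /=.
    rewrite lcE (sg u x) eua exu exa /= andbT.
    have xa : x != a by apply/eqP => xa; rewrite xa ig in exa.
    by rewrite xa.
  by exists [::], u, a; rewrite /= uF aF /pat /= exu (negbTE nyu) ylast exa eua.
case: (boolP (g y a)) => [eya|nya].
  exfalso; apply: (mn u [:: a]) => //; rewrite /adm /= uF aF eua exu nyu eya.
  by [].
case: (boolP (g x a)) => [exa|nxa].
  exfalso; apply: (mn a (b :: p'')) => //; rewrite /adm aF p'F pa exa nya.
  by [].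
have nua : forall z, z \in b :: p'' -> ~~ g u z.
  move=> z /(suffix_of g F a) [q2 [h1 h2 h3 h4]]; apply/negP => euz.
  apply: (mn u (z :: q2)); last by move: h4 => /=; rewrite !ltnS.
  rewrite /adm uF /= euz exu nyu -h3 ylast andbT.
  by rewrite /= in h2; rewrite h2 ?h1 //= p'F.
have nab : forall z, z \in p'' -> ~~ g a z.
  move=> z /(suffix_of g F b) [q2 [h1 h2 h3 h4]]; apply/negP => eaz.
  apply: (mn u [:: a, z & q2]); last by move: h4 => /=; rewrite !ltnS.
  rewrite /adm uF /= aF eua eaz exu nyu -h3 ylast andbT.
  move: p'F pa => /= /andP [_ pF] /andP [_ pb].
  by rewrite /= in h2; rewrite h2 ?h1.
move: pa ylast p'F => /= /andP [eab pb] ylast /andP [bF p''F].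
have nub : u != b.
  apply/eqP => ub; subst b; apply: (mn u p''); last by rewrite /= ltnW.
  by rewrite /adm uF p''F pb exu nyu ylast.
have sg' := lc_sym a sg; have ig' := lc_irr a ig.
have [s [v [w H]]] : exists s v w,
    [&& all (mem F) s, v \in F, w \in F & pat (local_comps (local_comp g a) s) x y v w].
  apply: (IH _ u (b :: p'')) => //; 
  rewrite /adm uF /= bF p''F /=.
  rewrite lcE nub sg eua eab /= (nua b) ?mem_head //=.
  rewrite (path_tr (e := g)) //; last first.
    by move=> c d dp; rewrite lcE (negbTE (nab d dp)) !andbF.
  have nax : ~~ g a x by rewrite sg.
  have nay : ~~ g a y by rewrite sg.
  by rewrite !(@lc_out g a x) // !(@lc_out g a y) // exu nyu ylast.
by exists (a :: s), v, w; rewrite /= aF.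
Qed.

End LC.
Section Fin.
Variables (T : finType) (x y : T).
Implicit Types (g : rel T).

Definition fin_hyp g (c : nat) (v w : 'I_c -> T) :=
 [/\ symmetric g, irreflexive g,
  forall i, pat g x y (v i) (w i),
  forall i, (v i != y) && (w i != x) &
  forall i j, i != j -> [&& ~~ g (v i) (v j), ~~ g (w i) (w j) & ~~ g (v i) (w j)]].

Lemma patP g a b : pat g x y a b ->
  [/\ g x a, g y a = false, g y b, g x b = false & g a b].
Proof. by case/and5P => -> /negbTE -> -> /negbTE -> ->. Qed.

Lemma fin_inj g (c : nat) (v w : 'I_c -> T) : fin_hyp g v w ->
  [/\ forall i j : 'I_c, v i = v j -> i = j,
      forall i j : 'I_c, w i = w j -> i = j &
      forall i j : 'I_c, v i != w j].
Proof.
case=> sg ig hp hn hc; split.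
- move=> i j vij; case: (eqVneq i j) => // nij; have := hc i j nij.
  by case/and3P => _ _; rewrite vij; case/patP: (hp j) => _ _ _ _ ->.
- move=> i j wij; case: (eqVneq i j) => // nij; have := hc i j nij.
  by case/and3P => _ _; rewrite -wij; case/patP: (hp i) => _ _ _ _ ->.
- move=> i j; apply/eqP => vw; case/patP: (hp i) => xv _ _ _ _.
  by case/patP: (hp j) => _ _ _; rewrite -vw xv.
Qed.

Lemma fin0 g (c : nat) (v w : 'I_c -> T) : fin_hyp g v w -> ~~ g x y -> has_vertex_minor g (@double_clique c).
Proof.
move=> H nxy; have [vi wi vw] := fin_inj H; case: H => sg ig hp hn hc.
exists [:: x; y], (fun p => if p.1 then w p.2 else v p.2); split.
  move=> [[] i] [[] j] /= e1.
  - by rewrite (wi _ _ e1).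
  - by move: (vw j i); rewrite e1 eqxx.
  - by move: (vw i j); rewrite e1 eqxx.
  - by rewrite (vi _ _ e1).
have g1y : forall a, local_comp g x y a = g y a.
  by move=> a; rewrite lcE (negbTE nxy) /= andbF.
move=> [[] i] [[] j]; rewrite /double_clique /local_comps /= lcE !g1y.
- case/patP: (hp i) => _ _ ywi xwi _; case/patP: (hp j) => _ _ ywj xwj _.
  rewrite ywi ywj !andbT !(@lc_out _ g x) ?xwi //.
  case: (eqVneq i j) => [<-|nij]; first by rewrite eqxx /= ig.
  have -> : w i != w j by apply/eqP => /wi /eqP; rewrite (negbTE nij).
  by case/and3P: (hc i j nij) => _ /negbTE -> _.
- case/patP: (hp i) => _ _ ywi xwi _; case/patP: (hp j) => _ yvj _ _ _.
  rewrite yvj !andbF /= (@lc_out _ g x) ?xwi // sg.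
  case: (eqVneq i j) => [<-|nij]; first by case/patP: (hp i) => _ _ _ _ ->.
  by case/and3P: (hc j i ltac:(by rewrite eq_sym)) => _ _ /negbTE ->.
- case/patP: (hp i) => xvi yvi _ _ _; case/patP: (hp j) => _ _ ywj xwj _.
  rewrite yvi /= (@lc_out' _ g x) ?xwj // andbF.
  case: (eqVneq i j) => [<-|nij]; first by case/patP: (hp i) => _ _ _ _ ->.
  by case/and3P: (hc i j nij) => _ _ /negbTE ->.
- case/patP: (hp i) => xvi yvi _ _ _; case/patP: (hp j) => xvj yvj _ _ _.
  rewrite yvi /= lcE xvi xvj !andbT.
  case: (eqVneq i j) => [<-|nij]; first by rewrite eqxx /= ig.
  have -> : v i != v j by apply/eqP => /vi /eqP; rewrite (negbTE nij).
  by case/and3P: (hc i j nij) => /negbTE -> _ _.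
Qed.


Lemma other3 g a b z : irreflexive g -> ~~ g a z -> ~~ g b z -> forall t,
  let h3 := local_comp (local_comp (local_comp g a) b) a in
  h3 z t = g z t /\ h3 t z = g t z.
Proof.
move=> ig naz nbz t /=.
have n1 : ~~ local_comp g a b z by rewrite (@lc_out' _ g a z b naz).
have n2 : ~~ local_comp (local_comp g a) b a z.
  by rewrite (@lc_out' _ (local_comp g a) b z a n1) (@lc_out' _ g a z a naz).
rewrite (@lc_out _ _ a z t n2) (@lc_out _ _ b z t n1) (@lc_out _ _ a z t naz).
by rewrite (@lc_out' _ _ a z t n2) (@lc_out' _ _ b z t n1) (@lc_out' _ _ a z t naz).
Qed.

Lemma fin_all g (c : nat) (v w : 'I_c -> T) : fin_hyp g v w ->
  has_vertex_minor g (@double_clique c).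
Proof.
case: (boolP (g x y)) => [gxy|nxy] H; last exact: fin0 H nxy.
case: c v w H => [|n] v w H.
  exists [::], (fun _ => x); split; first by move=> [? []].
  by move=> [? []].
have [vi wi vw] := fin_inj H; case: H => sg ig hp hn hc.
case/patP: (hp ord0) => xa ya yb xb ab.
case/andP: (hn ord0) => nay nbx.
set a := v ord0 in xa ya ab nay *; set b := w ord0 in yb xb ab nbx *.
apply: (hvm_lc (s := [:: a; b; a])).
pose v' i := if i == ord0 then b else v i.
pose w' i := if i == ord0 then a else w i.
have nxy : x != y by apply/eqP => e1; rewrite e1 ig in gxy.
have nax : a != x by apply/eqP => e1; rewrite e1 ig in xa.
have nby : b != y by apply/eqP => e1; rewrite e1 ig in yb.
have nab : a != b by apply/eqP => e1; rewrite e1 ig in ab.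
have cross : forall i j, i != j -> forall p q, p \in [:: v i; w i] -> q \in [:: v j; w j] ->
    ~~ g p q.
  move=> i j nij p q; rewrite !inE => /orP [] /eqP -> /orP [] /eqP ->.
  - by case/and3P: (hc i j nij).
  - by case/and3P: (hc i j nij).
  - by rewrite sg; case/and3P: (hc j i ltac:(by rewrite eq_sym)).
  - by case/and3P: (hc i j nij).
have h3eq : forall i p t, i != ord0 -> p \in [:: v i; w i] ->
    let h3 := local_comp (local_comp (local_comp g a) b) a in
    h3 p t = g p t /\ h3 t p = g t p.
  move=> i p t ni pi; apply: other3 => //.
    by apply: (cross ord0 i) => //; [rewrite eq_sym | rewrite !inE eqxx].
  by apply: (cross ord0 i) => //; [rewrite eq_sym | rewrite !inE eqxx orbT].
have vmem : forall i, v' i \in [:: v i; w i].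
  by move=> i; rewrite /v'; case: eqP => [->|_]; rewrite !inE eqxx ?orbT.
have wmem : forall i, w' i \in [:: v i; w i].
  by move=> i; rewrite /w'; case: eqP => [->|_]; rewrite !inE eqxx ?orbT.
set h1 := local_comp g a; set h2 := local_comp h1 b.
have sh1 : symmetric h1 := lc_sym a sg.
have ih1 : irreflexive h1 := lc_irr a ig.
have sh2 : symmetric h2 := lc_sym b sh1.
have ih2 : irreflexive h2 := lc_irr b ih1.
have h1xb : h1 x b by rewrite /h1 lcE (sg a x) xa ab eq_sym nbx /= xb.
have h1xy : h1 x y by rewrite /h1 lcE (sg a y) ya !andbF /=.
have h1yb : h1 y b by rewrite /h1 (@lc_out _ g a y) // sg ya.
have h1ba : h1 b a by rewrite /h1 lc_center' // sg.
have h1xa : h1 x a by rewrite /h1 lc_center'.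
have h1ya : h1 y a = false by rewrite /h1 lc_center'.
have h2xy : h2 x y = false by rewrite /h2 lcE nxy (sh1 b x) h1xb (sh1 b y) h1yb h1xy.
have h2xa : h2 x a = false by rewrite /h2 lcE eq_sym nax (sh1 b x) h1xb h1ba h1xa.
have h2ya : h2 y a by rewrite /h2 lcE eq_sym nay (sh1 b y) h1yb h1ba h1ya.
have h2bx : h2 b x by rewrite /h2 lc_center // sh1.
have h2by : h2 b y by rewrite /h2 lc_center // sh1.
have h2ba : h2 b a by rewrite /h2 lc_center.

have nh2ax : ~~ h2 a x by rewrite sh2 h2xa.
have h3xy : local_comp h2 a x y = false by rewrite (@lc_out _ h2 a x).
have h3xb : local_comp h2 a x b by rewrite (@lc_out _ h2 a x) // (sh2 x b).
have h3yb : local_comp h2 a y b = false.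
  by rewrite lcE eq_sym nby (sh2 a y) h2ya (sh2 a b) h2ba /= sh2 h2by.
have h3ya : local_comp h2 a y a by rewrite lc_center'.
have h3xa : local_comp h2 a x a = false by rewrite lc_center'.
have h3ba : local_comp h2 a b a by rewrite lc_center'.
have -> : local_comps g [:: a; b; a] = local_comp h2 a by [].
apply: (@fin0 _ _ v' w'); last by rewrite h3xy.
split.
- exact: lc_sym.
- exact: lc_irr.
- move=> i; rewrite /v' /w'; case: eqP => [_|/eqP ni].
    by rewrite /pat h3xb h3yb h3ya h3xa h3ba.
  have vi' : v i \in [:: v i; w i] by rewrite !inE eqxx.
  have wi' : w i \in [:: v i; w i] by rewrite !inE eqxx orbT.
  rewrite /pat (proj2 (h3eq _ _ x ni vi')) (proj2 (h3eq _ _ y ni vi')).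
  rewrite (proj2 (h3eq _ _ x ni wi')) (proj2 (h3eq _ _ y ni wi')).
  by rewrite (proj1 (h3eq _ _ (w i) ni vi')); exact: hp.
- by move=> i; rewrite /v' /w'; case: (i == ord0); [rewrite nby nax | exact: hn].
- move=> i j nij.
  have key3 : forall p q, p \in [:: v i; w i] -> q \in [:: v j; w j] ->
      ~~ local_comp h2 a p q.
    move=> p q pi qj; case: (eqVneq i ord0) => [i0|ni].
      have nj : j != ord0 by rewrite -i0 eq_sym.
      by rewrite (proj2 (h3eq _ _ p nj qj)); apply: (cross i j).
    by rewrite (proj1 (h3eq _ _ q ni pi)); apply: (cross i j).
  by rewrite !key3.
Qed.

End Fin.
Lemma rank_le1 m n (M : 'M['F_2]_(m,n)) (a : 'I_m -> 'F_2) (r : 'I_n -> 'F_2) :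
  (forall i j, M i j = (a i * r j)%R) -> \rank M <= 1.
Proof.
move=> h; have -> : M = mulmx (\col_i a i) (\row_j r j).
  by apply/matrixP => i j; rewrite !mxE big_ord1 !mxE h.
exact: leq_trans (mxrankM_maxl _ _) (rank_leq_col _).
Qed.

Section Comp.
Variables (T : finType) (e : rel T) (x y : T).
Hypotheses (sg : symmetric e) (ig : irreflexive e).
Let S := [set x; y].
Let C := components_del2 e x y.
Let d := del2 e x y.

Lemma d_sym : symmetric d.
Proof.
move=> a b; rewrite /d /del2 (sg a b).
by case: (a \in [set x; y]); case: (b \in [set x; y]); rewrite /= ?andbF.
Qed.

Lemma d_sub a b : d a b -> e a b.
Proof. by case/and3P. Qed.

Lemma conn_sym a b : connect d a b = connect d b a.
Proof. exact: (sym_connect_sym d_sym). Qed.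

Lemma conn_notS a b : a \notin S -> connect d a b -> b \notin S.
Proof.
rewrite conn_sym => aS /connectP [[|c p] pp e1].
  by rewrite /= in e1; rewrite -e1.
by case/andP: pp => /and3P [].
Qed.

Lemma compP F : F \in C -> exists2 a, a \notin S & F = [set b | connect d a b].
Proof. by case/imsetP => a; rewrite inE => aS ->; exists a. Qed.

Lemma comp_notS F z : F \in C -> z \in F -> z \notin S.
Proof. by case/compP => a aS -> ; rewrite inE; apply: conn_notS. Qed.

Lemma comp_closed F z t : F \in C -> z \in F -> e z t -> (t \in F) || (t \in S).
Proof.
move=> FC zF ezt; case: (boolP (t \in S)) => tS; first by rewrite orbT.
apply/orP; left.
have zS := comp_notS FC zF.
move: zF; case/compP: FC => a aS -> ; rewrite !inE => az.
apply: (connect_trans az); apply: connect1; rewrite /d /del2 ezt /=.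
by apply/andP; split.
Qed.

Lemma comp_disj F1 F2 z : F1 \in C -> F2 \in C -> z \in F1 -> z \in F2 -> F1 = F2.
Proof.
case/compP => a1 _ -> ; case/compP => a2 _ ->; rewrite !inE => c1 c2.
have c12 : connect d a1 a2 by apply: (connect_trans c1); rewrite conn_sym.
apply/setP => t; rewrite !inE; apply/idP/idP => h.
  by apply: (connect_trans _ h); rewrite conn_sym.
exact: (connect_trans c12 h).
Qed.

Lemma comp_cover z : z \notin S -> exists2 F, F \in C & z \in F.
Proof.
move=> zS; exists [set b | connect d z b]; last by rewrite inE connect0.
by apply/imsetP; exists z; rewrite // inE.
Qed.

Lemma comp_path F u w : F \in C -> u \in F -> w \in F ->
  exists p, [&& path e u p, all (mem F) p & last u p == w].
Proof.
case/compP => a aS ->; rewrite !inE => au aw.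
have : connect d u w by apply: (connect_trans _ aw); rewrite conn_sym.
case/connectP => p pp ->; exists p; rewrite eqxx andbT.
rewrite (sub_path d_sub pp) /=; apply/allP => z zp; rewrite /= inE.
apply: (connect_trans au); apply: (path_connect pp); by rewrite in_cons zp orbT.
Qed.

Definition Inv g := [/\ symmetric g, irreflexive g &
  forall F z t, F \in C -> z \in F -> g z t -> (t \in F) || (t \in S)].

Lemma inv_e : Inv e.
Proof. by split=> // F z t; apply: comp_closed. Qed.

Lemma inv_nadj g v F a : Inv g -> v \notin S -> F \in C -> v \notin F -> a \in F ->
  ~~ g v a.
Proof.
case=> sgg igg cl vS FC vF aF; apply/negP => gva.
have [Fv FvC vFv] := comp_cover vS.
case/orP: (cl _ _ _ FvC vFv gva) => [aFv|aS].
  by move: vF; rewrite -(comp_disj FvC FC aFv aF) vFv.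
by move: (comp_notS FC aF); rewrite aS.
Qed.

Lemma inv_lc g v : Inv g -> v \notin S -> Inv (local_comp g v).
Proof.
move=> I vS; have [sgg igg cl] := I; split; [exact: lc_sym | exact: lc_irr|].
move=> F z t FC zF; case: (boolP (v \in F)) => vF; last first.
  by rewrite (@lc_out _ g v z) ?(inv_nadj I vS FC vF zF) //; apply: cl.
rewrite lcE; case: ifP => [/and3P [_ _ gvt] _|_]; last exact: cl.
exact: cl FC vF gvt.
Qed.

Lemma inv_lcs g s : Inv g -> all (fun v => v \notin S) s -> Inv (local_comps g s).
Proof.
elim: s g => // v s IH g I /andP [vS sS]; rewrite lcs_cons; apply: IH => //.
exact: inv_lc.
Qed.

Lemma frame g s F a b : Inv g -> F \in C ->
  all (fun v => (v \notin S) && (v \notin F)) s -> a \in F ->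
  local_comps g s a b = g a b /\ local_comps g s b a = g b a.
Proof.
elim: s g => // v s IH g I FC /andP [/andP [vS vF] sS] aF; rewrite lcs_cons.
have n := inv_nadj I vS FC vF aF.
have [-> ->] := IH _ (inv_lc I vS) FC sS aF.
by rewrite (@lc_out _ g v a) // (@lc_out' _ g v a).
Qed.

Lemma split_agree pre mid post F : F \in C ->
  all (fun v => (v \notin S) && (v \notin F)) (pre ++ post) -> all (mem F) mid ->
  agree F (local_comps e (pre ++ mid ++ post)) (local_comps e mid).
Proof.
move=> FC; rewrite all_cat => /andP [hpre hpost] hmid.
rewrite !lcs_cat.
have nS : forall s, all (fun v => (v \notin S) && (v \notin F)) s ->
    all (fun v => v \notin S) s.
  by move=> s; apply: sub_all => v /andP [].
have fr : forall g s, Inv g -> all (fun v => (v \notin S) && (v \notin F)) s ->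
    agree F (local_comps g s) g.
  move=> g s I hs a b /orP [] hF.
    by case: (frame b I FC hs hF).
  by case: (frame a I FC hs hF).
set g0 := local_comps e pre.
have I0 : Inv g0 by apply: inv_lcs inv_e (nS _ hpre).
have ag1 := agree_lcs (fr _ _ inv_e hpre) hmid.
have I1 : Inv (local_comps g0 mid).
  apply: inv_lcs I0 _; apply/allP => z zm; apply: (comp_notS FC).
  by move/allP: hmid => /(_ z zm).
have ag2 := fr _ _ I1 hpost.
by move=> a b h; rewrite ag2 // ag1.
Qed.


Lemma rank_facts F : cut_rank e [set x; y] F = 2 ->
  [/\ exists2 u, u \in F & e x u, exists2 u, u \in F & e y u &
      exists2 u, u \in F & e x u != e y u].
Proof.
rewrite /cut_rank; set M := (X in mxrank X) => hr.
have K : forall (a : 'I_#|[set x; y]| -> 'F_2) (r : 'I_#|F| -> 'F_2),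
    (forall i j, M i j = (a i * r j)%R) -> False.
  move=> a r h; have := rank_le1 h; by rewrite hr.
split.
- case: (classic (exists2 u, u \in F & e x u)) => // hn; exfalso.
  apply: (K (fun i => ((enum_val i == y)%:R)%R) (fun j => ((e y (enum_val j))%:R)%R)) => i j.
  have nx : ~~ e x (enum_val j).
    by apply/negP => h; apply: hn; exists (enum_val j) => //; apply: enum_valP.
  rewrite /M mxE; case/set2P: (enum_valP i) => ->.
    by case: eqP => [<-|_]; rewrite (negbTE nx) /= ?GRing.mulr0 ?GRing.mul0r.
  by rewrite eqxx GRing.mul1r.
- case: (classic (exists2 u, u \in F & e y u)) => // hn; exfalso.
  apply: (K (fun i => ((enum_val i == x)%:R)%R) (fun j => ((e x (enum_val j))%:R)%R)) => i j.
  have ny : ~~ e y (enum_val j).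
    by apply/negP => h; apply: hn; exists (enum_val j) => //; apply: enum_valP.
  rewrite /M mxE; case/set2P: (enum_valP i) => ->; last first.
    by case: eqP => [<-|_]; rewrite (negbTE ny) /= ?GRing.mulr0 ?GRing.mul0r.
  by rewrite eqxx GRing.mul1r.
- case: (classic (exists2 u, u \in F & e x u != e y u)) => // hn; exfalso.
  apply: (K (fun i => 1%R) (fun j => ((e x (enum_val j))%:R)%R)) => i j.
  have exy : e x (enum_val j) = e y (enum_val j).
    apply/eqP/negPn/negP => h; apply: hn; exists (enum_val j) => //.
    exact: enum_valP.
  by rewrite /M mxE GRing.mul1r; case/set2P: (enum_valP i) => ->; rewrite ?exy.
Qed.

Lemma comp_sol F : F \in C -> cut_rank e [set x; y] F = 2 ->
  exists t : seq T * T * T, [&& all (mem F) t.1.1, t.1.2 \in F, t.2 \in F &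
     pat (local_comps e t.1.1) x y t.1.2 t.2].
Proof.
move=> FC /rank_facts [[u1 u1F xu1] [u2 u2F yu2] [u3 u3F xy3]].
case exu3: (e x u3).
  have nyu3 : ~~ e y u3 by move: xy3; rewrite exu3; case: (e y u3).
  have [p /and3P [pp pF /eqP pl]] := comp_path FC u3F u2F.
  have := @key T x y F (size p) e u3 p (leqnn _) sg ig.
  case.
    by rewrite /adm u3F pF pp exu3 nyu3 pl yu2.
  move=> s [v [w H]]; by exists (s, v, w).
have eyu3 : e y u3 by move: xy3; rewrite exu3; case: (e y u3).
have [p /and3P [pp pF /eqP pl]] := comp_path FC u3F u1F.
have := @key T y x F (size p) e u3 p (leqnn _) sg ig.
case.
  by rewrite /adm u3F pF pp eyu3 exu3 pl xu1.
move=> s [v [w /and4P [sF vF wF /and5P [a1 a2 a3 a4 a5]]]].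
exists (s, w, v); rewrite /= sF vF wF /pat a1 a2 a3 a4 /=.
by rewrite lcs_sym.
Qed.

End Comp.
Lemma split_in (I : eqType) (l : seq I) (i : I) : uniq l -> i \in l ->
  exists l1 l2, l = l1 ++ i :: l2 /\ i \notin l1 ++ l2.
Proof.
move=> u il; move: u; case/splitPr: il => l1 l2 u; exists l1, l2; split => //.
move: u; rewrite cat_uniq => /and3P [_ h1 /= /andP [h2 _]].
by rewrite mem_cat negb_or h2 andbT; move: h1; rewrite /= negb_or => /andP [].
Qed.

Theorem lemma7p7 (T : finType) (e : rel T) (x y : T) :
  simple_graph e ->
  (forall F, F \in components_del2 e x y -> cut_rank e [set x; y] F = 2%N) ->
  has_vertex_minor e (@double_clique #|components_del2 e x y|).
Proof.
move=> [sg ig] hr.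
set C := components_del2 e x y.
have sol : forall i : 'I_#|C|, exists t : seq T * T * T,
    [&& all (mem (enum_val i)) t.1.1, t.1.2 \in enum_val i, t.2 \in enum_val i &
     pat (local_comps e t.1.1) x y t.1.2 t.2].
  move=> i; have Fi : enum_val i \in C by apply: enum_valP.
  exact: (comp_sol sg ig Fi (hr _ Fi)).
have [f hf] := fin_all_exists sol.
pose Sq i := (f i).1.1; pose vv i := (f i).1.2; pose ww i := (f i).2.
have FC : forall i : 'I_#|C|, enum_val i \in C by move=> i; apply: enum_valP.
have hS : forall i : 'I_#|C|, all (mem (enum_val i)) (Sq i) by move=> i; case/and4P: (hf i).
have hv : forall i : 'I_#|C|, vv i \in enum_val i by move=> i; case/and4P: (hf i).
have hw : forall i : 'I_#|C|, ww i \in enum_val i by move=> i; case/and4P: (hf i).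
have hp : forall i : 'I_#|C|, pat (local_comps e (Sq i)) x y (vv i) (ww i).
  by move=> i; case/and4P: (hf i).
have disj : forall (i j : 'I_#|C|) z, i != j -> z \in enum_val i -> z \notin enum_val j.
  move=> i j z nij zi; apply/negP => zj.
  have := comp_disj sg (FC i) (FC j) zi zj => /enum_val_inj eij.
  by rewrite eij eqxx in nij.
pose Sall := flatten [seq Sq i | i <- enum 'I_#|C|].
apply: (hvm_lc (s := Sall)).
have inS : forall z, z \in Sall -> exists2 i : 'I_#|C|, z \in enum_val i & z \in Sq i.
  move=> z /flatten_mapP [i _ zi]; exists i => //.
  by move/allP: (hS i) => /(_ z zi).
have allS : all (fun v => v \notin [set x; y]) Sall.
  apply/allP => z /inS [i zi _] /=; exact: (comp_notS sg (FC i) zi).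
have Ig := inv_lcs sg (inv_e x y sg ig) allS.
case: (Ig) => sg' ig' cl.
apply: (fin_all (x:=x) (y:=y) (v := vv) (w := ww)); split => //.
- move=> i.
  have [l1 [l2 [el nil]]] := split_in (enum_uniq 'I_#|C|) (mem_enum _ i).
  have eS : Sall = flatten [seq Sq j | j <- l1] ++ Sq i ++ flatten [seq Sq j | j <- l2].
    by rewrite /Sall el map_cat flatten_cat.
  have ag : agree (enum_val i) (local_comps e Sall) (local_comps e (Sq i)).
    rewrite eS; apply: (split_agree (x:=x) (y:=y) sg ig) => //.
    rewrite -flatten_cat -map_cat; apply/allP => z /flatten_mapP [j jl zj].
    have nij : i != j by apply/eqP => eij; rewrite eij jl in nil.
    have zF : z \in enum_val j by move/allP: (hS j) => /(_ z zj).
    rewrite (comp_notS sg (FC j) zF) /=.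
    by apply: (disj j i) => //; rewrite eq_sym.
  have vi := hv i; have wi := hw i.
  rewrite /pat !(ag x) ?vi ?wi ?orbT // !(ag y) ?vi ?wi ?orbT // (ag (vv i)) ?vi //.
  exact: hp.
- move=> i; have := comp_notS sg (FC i) (hv i); have := comp_notS sg (FC i) (hw i).
  by rewrite !inE !negb_or => /andP [-> _] /andP [_ ->].
- move=> i j nij.
  have nadj : forall p q, p \in enum_val i -> q \in enum_val j ->
      ~~ local_comps e Sall p q.
    move=> p q pi qj; apply/negP => g1.
    case/orP: (cl _ _ _ (FC i) pi g1) => [qi|qS].
      by move: (disj _ _ _ nij qi); rewrite qj.
    by move: (comp_notS sg (FC j) qj); rewrite qS.
  by rewrite !nadj.
Qed.
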